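(* Under the setting described in the context, let $j\in J$ and let $u_j$ be an exact eigenfunction associated with $\lambda_i$. Assume $\Lambda_p\neq\lambda_i$ for all $p\notin J$. Let $W=\Pi_h u_j-\mathcal{P}_{a_h^\ell}u_j$, $\beta_p=m_h^\ell(W,U_p^\ell)$ for $p\notin J$, and $Z=\sum_{p\notin J}\frac{\lambda_i}{\Lambda_p-\lambda_i}\beta_pU_p^\ell$. Then $$\|W\|^2_{m_h^\ell}=m_h^\ell(u_j-\Pi_hu_j,Z)+(m-m_h^\ell)(u_j,Z)+\frac{1}{\lambda_i}(a_h^\ell-a)(u_j,Z),$$ $$\|W\|^2_{a_h^\ell}=\lambda_i\,m_h^\ell(u_j-\Pi_hu_j,W)+\lambda_i\|W\|^2_{m_h^\ell}+\lambda_i(m-m_h^\ell)(u_j,W)+(a_h^\ell-a)(u_j,W).$$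
   Context: Let $d\in\{2,3\}$ and $\Omega\subset\mathbb{R}^d$ a nonempty bounded connected open set with smooth boundary $\Gamma=\partial\Omega$; fix integers $r\ge1$, $k\ge1$; $\Omega$ is at least $C^{r+2}$ and $C^{k+1}$ regular. $H^1(\Omega,\Gamma)=\{u\in H^1(\Omega):u|_\Gamma\in H^1(\Gamma)\}$; $\nabla_\Gamma$ is the tangential gradient; $b(x)=x-\mathrm{d}(x)\nabla\mathrm{d}(x)$, $\mathrm{d}$ the signed distance to $\Gamma$, is the orthogonal projection onto $\Gamma$ near $\Gamma$. Continuous problem: $a(u,v)=\int_\Omega\nabla u\cdot\nabla v\,dx+\int_\Gamma\nabla_\Gamma u\cdot\nabla_\Gamma v\,ds+\int_\Gamma uv\,ds$, $m(u,v)=\int_\Omega uv\,dx$; eigenpairs $(\lambda_n,u_n)$, $a(u_n,v)=\lambda_n m(u_n,v)$ for all $v\in H^1(\Omega,\Gamma)$, eigenvalues increasing with multiplicity, $(u_n)$ $m$-orthonormal. Fix $\lambda_i$ of multiplicity $N$, $J=\{i,\dots,i+N-1\}$, $\lambda_j=\lambda_i$ for $j\in J$. Meshes and lift: $\mathcal{T}_h^{(1)}$ quasi-uniform simplicial meshes of size $h$ with boundary vertices on $\Gamma$, $T=F_T(\hat T)$ with $F_T$ affine. For $T$ with at least two vertices on $\Gamma$ (barycentric coordinates $\lambda_l$, vertices $\hat v_l$ of $\hat T$, $\varepsilon_l=1$ iff $F_T(\hat v_l)\in\Gamma$, $\lambda^*=\sum\varepsilon_l\lambda_l$, $\hat\sigma=\{\lambda^*=0\}$,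 $\hat y=\frac1{\lambda^*}\sum\varepsilon_l\lambda_l\hat v_l$): $F_T^{(e)}=F_T$ on $\hat\sigma$, $F_T^{(e)}(\hat x)=F_T(\hat x)+(\lambda^* )^{r+2}(b(F_T(\hat y))-F_T(\hat y))$ otherwise; else $F_T^{(e)}=F_T$. $F_T^{(r)}$ is the $\mathbb{P}^r$-Lagrange interpolant of $F_T^{(e)}$, $T^{(r)}=F_T^{(r)}(\hat T)$, $\Omega_h=\bigcup T^{(r)}$, $\Gamma_h=\partial\Omega_h$. $G_h:\Omega_h\to\Omega$ equals $F^{(e)}_{T^{(r)}}\circ(F_T^{(r)})^{-1}$ on $T^{(r)}$ (formula of $F_T^{(e)}$ with $F_T$ replaced by $F_T^{(r)}$); continuous, elementwise $C^1$-diffeomorphism, $G_h|_{\Gamma_h}=b$. Lift: $v^\ell\circ G_h=v$. Discrete: $\mathbb{V}_h=\{\chi\in C^0(\Omega_h):\chi|_{T^{(r)}}\circ F_T^{(r)}\in\mathbb{P}^k(\hat T)\}$, $\mathbb{V}_h^\ell$ its lifts; $a_h(U,V)=\int_{\Omega_h}\nabla U\cdot\nabla V+\int_{\Gamma_h}\nabla_{\Gamma_h}U\cdot\nabla_{\Gamma_h}V+\int_{\Gamma_h}UV$, $m_h(U,V)=\int_{\Omega_h}UV$; for $v,w\in H^1(\Omega,\Gamma)$, $a_h^\ell(v,w)=a_h(v\circ G_h,w\circ G_h)$, $m_h^\ell(v,w)=m_h(v\circ G_h,w\circ G_h)$, norms $\|v\|_{a_h^\ell}=a_h^\ell(v,v)^{1/2}$,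 $\|v\|_{m_h^\ell}=m_h^\ell(v,v)^{1/2}$. Discrete eigenpairs $(\Lambda_p,U_p)$, $p=1,\dots,\dim\mathbb{V}_h$: $a_h(U_p,V)=\Lambda_pm_h(U_p,V)$ for all $V\in\mathbb{V}_h$, $(U_p)$ $m_h$-orthonormal basis of $\mathbb{V}_h$. $\mathbb{F}_h^\ell=\mathrm{span}\{U_j^\ell:j\in J\}$. Projections on $H^1(\Omega,\Gamma)$: $\Pi_h v\in\mathbb{V}_h^\ell$ with $a_h^\ell(\Pi_hv,w)=a_h^\ell(v,w)$ for all $w\in\mathbb{V}_h^\ell$; $\mathcal{P}_{a_h^\ell}v\in\mathbb{F}_h^\ell$ with $a_h^\ell(\mathcal{P}_{a_h^\ell}v,w)=a_h^\ell(v,w)$ for all $w\in\mathbb{F}_h^\ell$; $\mathcal{P}_{m_h^\ell}v\in\mathbb{F}_h^\ell$ with $m_h^\ell(\mathcal{P}_{m_h^\ell}v,w)=m_h^\ell(v,w)$ for all $w\in\mathbb{F}_h^\ell$. *)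

(* Defs.v *)
(* Abstract (variational) rendering of the finite-element eigenvalue setting:
   H plays the role of H^1(Omega,Gamma); a, m are the exact forms, ah, mh the
   lifted discrete forms a_h^l, m_h^l; U : 'I_n -> H are the lifts U_p^l of the
   discrete eigenfunctions (paper index p+1 <-> ordinal p). *)
From HB Require Import structures.
From mathcomp Require Import all_boot all_order all_algebra.
From mathcomp Require Import reals.
Set Implicit Arguments. Unset Strict Implicit. Unset Printing Implicit Defensive.
Import Order.TTheory GRing.Theory Num.Theory.
Local Open Scope ring_scope.

Definition sym_bilinear (R : realType) (H : lmodType R) (f : H -> H -> R) : Prop :=
  (forall u v, f u v = f v u) /\
  (forall (c : R) u v w, f u (c *: v + w) = c * f u v + f u w).

Definition pos_def (R : realType) (H : lmodType R) (f : H -> H -> R) : Prop :=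
  forall v, v != 0 -> 0 < f v v.

Definition in_span (R : realType) (H : lmodType R) (n : nat)
    (U : 'I_n -> H) (P : pred 'I_n) (v : H) : Prop :=
  exists c : 'I_n -> R, v = \sum_(p < n | P p) c p *: U p.

Definition is_proj (R : realType) (H : lmodType R) (f : H -> H -> R)
    (S : H -> Prop) (v p : H) : Prop :=
  S p /\ forall w, S w -> f p w = f v w.

(* discrete index set J (0-based ordinal p corresponds to paper index p+1) *)
Definition Jd (n i N : nat) : pred 'I_n := fun p => (i <= p.+1 < i + N)%N.
Arguments Jd : clear implicits.

(* Main.v *)
Require Import Defs.
From HB Require Import structures.
From mathcomp Require Import all_boot all_order all_algebra.
From mathcomp Require Import reals.
From mathcomp Require Import ring lra.
Import Order.TTheory GRing.Theory Num.Theory.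
Local Open Scope ring_scope.
Set Implicit Arguments.

Section Bil.
Variables (R : realType) (H : lmodType R) (f : H -> H -> R).
Hypothesis hf : sym_bilinear f.

Lemma bsym u v : f u v = f v u. Proof. by case: hf. Qed.
Lemma bDr u v w : f u (v + w) = f u v + f u w.
Proof. case: hf => _ L; have := L 1 u v w; by rewrite scale1r mul1r. Qed.
Lemma b0r u : f u 0 = 0.
Proof. have := bDr u 0 0; rewrite addr0 => h; lra. Qed.
Lemma bZr c u v : f u (c *: v) = c * f u v.
Proof. case: hf => _ L; have := L c u v 0; by rewrite !addr0 b0r addr0. Qed.
Lemma bNr u v : f u (- v) = - f u v.
Proof. by rewrite -scaleN1r bZr mulN1r. Qed.
Lemma bBr u v w : f u (v - w) = f u v - f u w.
Proof. by rewrite bDr bNr. Qed.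
Lemma bBl u v w : f (v - w) u = f v u - f w u.
Proof. by rewrite bsym bBr (bsym u) (bsym u). Qed.
Lemma bsumr u (I : finType) (P : pred I) (F : I -> H) :
  f u (\sum_(p | P p) F p) = \sum_(p | P p) f u (F p).
Proof.
apply: (big_rec2 (fun x y => f u x = y)); first exact: b0r.
by move=> k y1 y2 _ <-; rewrite bDr.
Qed.
Lemma bsumZr u (I : finType) (P : pred I) (c : I -> R) (F : I -> H) :
  f u (\sum_(p | P p) c p *: F p) = \sum_(p | P p) c p * f u (F p).
Proof. by rewrite bsumr; apply: eq_bigr => p _; rewrite bZr. Qed.
End Bil.

Section Span.
Variables (R : realType) (H : lmodType R) (n : nat) (U : 'I_n -> H).

Lemma span_U (P : pred 'I_n) q : P q -> in_span U P (U q).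
Proof.
move=> Pq; exists (fun p => (p == q)%:R).
rewrite (bigD1 q) //= eqxx scale1r big1 ?addr0 // => p /andP[_ /negbTE ->].
by rewrite scale0r.
Qed.

Lemma span_T (P : pred 'I_n) v : in_span U P v -> in_span U predT v.
Proof.
case=> c ->; exists (fun p => if P p then c p else 0).
rewrite big_mkcond /=; apply: eq_bigr => p _; by case: (P p); rewrite ?scale0r.
Qed.

Variable mh : H -> H -> R.
Hypothesis hm : sym_bilinear mh.
Hypothesis orth : forall p q, mh (U p) (U q) = (p == q)%:R.

Lemma mh_span (P : pred 'I_n) c q :
  mh (U q) (\sum_(p < n | P p) c p *: U p) = if P q then c q else 0.
Proof.
rewrite bsumZr //; case: ifP => Pq.
  rewrite (bigD1 q) //= orth eqxx mulr1 big1 ?addr0 // => p /andP[_ pq].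
  by rewrite orth eq_sym (negbTE pq) mulr0.
rewrite big1 // => p Pp; rewrite orth; case: eqP => [e|_]; last by rewrite mulr0.
by move: Pp; rewrite -e Pq.
Qed.
End Span.
Theorem mainTheorem4 (R : realType) (H : lmodType R)
  (a m ah mh : H -> H -> R)
  (* exact eigenpairs (paper indices >= 1) *)
  (lam : nat -> R) (u : nat -> H)
  (* discrete eigenpairs, lifted: U p = U_{p+1}^l, Lam p = Lambda_{p+1} *)
  (n : nat) (Lam : 'I_n -> R) (U : 'I_n -> H)
  (i N j : nat) (Piu Pau : H) :
  sym_bilinear a -> sym_bilinear m -> sym_bilinear ah -> sym_bilinear mh ->
  pos_def a -> pos_def m -> pos_def ah -> pos_def mh ->
  (* continuous eigenproblem *)
  (forall k v, a (u k) v = lam k * m (u k) v) ->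
  (forall k l, m (u k) (u l) = (k == l)%:R) ->
  (forall k l, (1 <= k <= l)%N -> lam k <= lam l) ->
  (* lambda_i of multiplicity N, J = {i,...,i+N-1} *)
  (1 <= i)%N -> (1 <= N)%N ->
  (forall k, (i <= k < i + N)%N -> lam k = lam i) ->
  ((1 < i)%N -> lam i.-1 < lam i) -> lam i < lam (i + N) ->
  (* discrete eigenproblem on V_h = span U, (U p) m_h-orthonormal basis *)
  (i + N - 1 <= n)%N ->
  (forall p q, mh (U p) (U q) = (p == q)%:R) ->
  (forall p v, in_span U predT v -> ah (U p) v = Lam p * mh (U p) v) ->
  (forall p q : 'I_n, (p <= q)%N -> Lam p <= Lam q) ->
  (* the statement *)
  (i <= j < i + N)%N ->
  (forall p, p \notin Jd n i N -> Lam p != lam i) ->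
  is_proj ah (in_span U predT) (u j) Piu ->
  is_proj ah (in_span U (Jd n i N)) (u j) Pau ->
  let W := Piu - Pau in
  let beta := fun p => mh W (U p) in
  let Z := \sum_(p < n | p \notin Jd n i N)
             (lam i / (Lam p - lam i) * beta p) *: U p in
  mh W W = mh (u j - Piu) Z + (m (u j) Z - mh (u j) Z)
           + (lam i)^-1 * (ah (u j) Z - a (u j) Z)
  /\
  ah W W = lam i * mh (u j - Piu) W + lam i * mh W W
           + lam i * (m (u j) W - mh (u j) W) + (ah (u j) W - a (u j) W).
Proof.
move=> sa sm sah smh pa pm pah pmh eig orth _ hi _ mult _ _ _ Uorth Ueig _ hj hLam [PiS PiP] [PaS PaP] W beta Z.
set J := Jd n i N.
have inJ q : (q \in J) = J q by [].
have lj : lam j = lam i by apply: mult.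
have lpos : 0 < lam i.
  have ui0 : u i != 0.
    apply/eqP => e; have := orth i i; rewrite eqxx e b0r //.
    by move=> /eqP; rewrite eq_sym oner_eq0.
  by have := pa _ ui0; rewrite eig orth eqxx mulr1.
have PaT := span_T PaS.
have [c1 Pie] := PiS.
have [c2 Pae] := PaS.
have mhPi q : mh (U q) Piu = c1 q by rewrite Pie mh_span.
have mhPa q : mh (U q) Pau = if J q then c2 q else 0 by rewrite Pae mh_span.
have betaE q : beta q = c1 q - (if J q then c2 q else 0).
  by rewrite /beta /W bBl // !(bsym smh _ (U q)) mhPi mhPa.
have ahWU p : ah W (U p) = Lam p * beta p.
  by rewrite bsym // /W bBr // !Ueig // -mulrBr -bBr // /beta (bsym smh).
have beta0 q : J q -> beta q = 0.
  move=> qJ.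
  have Uq0 : U q != 0.
    apply/eqP=> e; have := Uorth q q; rewrite eqxx e b0r //.
    by move=> /eqP; rewrite eq_sym oner_eq0.
  have Lq : Lam q != 0.
    have := pah _ Uq0; rewrite Ueig ?Uorth ?eqxx ?mulr1; last exact: span_U.
    by move=> /lt0r_neq0.
  have : Lam q * beta q = 0.
    rewrite -ahWU /W bBl // PiP; last exact: span_U.
    by rewrite PaP ?subrr //; exact: span_U.
  by move/eqP; rewrite mulf_eq0 (negbTE Lq) /= => /eqP.
have mhWPa : mh W Pau = 0.
  rewrite Pae bsumZr // big1 // => p pJ.
  by rewrite -/(beta p) beta0 // mulr0.
have mhWW : mh W W = \sum_(p < n | p \notin J) beta p * beta p.
  rewrite {2}/W bBr // mhWPa subr0 Pie bsumZr // (bigID (fun p => p \in J)) /=.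
  rewrite big1 ?add0r; last by move=> p pJ; rewrite -/(beta p) beta0 ?mulr0.
  apply: eq_bigr => p pJ; rewrite -/(beta p) betaE.
  by move: pJ; rewrite inJ => /negbTE ->; rewrite subr0.
have ahWPa : ah W Pau = 0.
  by rewrite /W bBl // PiP // PaP // subrr.
split.
  set k := fun p => lam i / (Lam p - lam i) * beta p.
  have ZT : in_span U predT Z by apply: (@span_T _ _ _ _ (fun p => p \notin J)); exists k.
  have ahPaU p : p \notin J -> ah Pau (U p) = 0.
    by move=> pJ; rewrite bsym // Ueig // mhPa; move: pJ; rewrite inJ => /negbTE ->; rewrite mulr0.
  have mhPaU p : p \notin J -> mh Pau (U p) = 0.
    by move=> pJ; rewrite bsym // mhPa; move: pJ; rewrite inJ => /negbTE ->.
  have ahPaZ : ah Pau Z = 0.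
    by rewrite /Z bsumZr // big1 // => p pJ; rewrite ahPaU ?mulr0.
  have mhPaZ : mh Pau Z = 0.
    by rewrite /Z bsumZr // big1 // => p pJ; rewrite mhPaU ?mulr0.
  have ahWZ : ah Piu Z = \sum_(p < n | p \notin J) k p * (Lam p * beta p).
    have -> : ah Piu Z = ah W Z by rewrite /W bBl // ahPaZ subr0.
    by rewrite /Z bsumZr //; apply: eq_bigr => p _; rewrite ahWU.
  have mhWZ : mh Piu Z = \sum_(p < n | p \notin J) k p * beta p.
    have -> : mh Piu Z = mh W Z by rewrite /W bBl // mhPaZ subr0.
    by rewrite /Z bsumZr.
  rewrite (bBl smh Z (u j) Piu) eig lj -PiP // ahWZ mhWZ mhWW.
  suff -> : \sum_(p < n | p \notin J) beta p * beta p =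
     (lam i)^-1 * \sum_(p < n | p \notin J) k p * (Lam p * beta p)
     - \sum_(p < n | p \notin J) k p * beta p.
    have lne : lam i != 0 by rewrite gt_eqF.
    by field; rewrite lne.
  rewrite mulr_sumr -sumrB; apply: eq_bigr => p pJ.
  have hne : Lam p - lam i != 0 by rewrite subr_eq0; apply: hLam.
  have lne : lam i != 0 by rewrite gt_eqF.
  rewrite /k; field; by rewrite hne.
have WT : ah (u j) W = ah Piu W.
  rewrite /W !bBr // PiP // PiP //.
have mhPiW : mh Piu W = mh W W.
  by rewrite {1}/W bBl // (bsym smh Pau) mhWPa subr0.
have ahWW : ah W W = ah Piu W.
  by rewrite {1}/W bBl // (bsym sah Pau) ahWPa subr0.
rewrite (bBl smh W (u j) Piu) eig lj WT mhPiW ahWW.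
ring.
Qed.
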